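(* For every even $m\ge 2$ and every $n\ge 2$, the $m$th order $n$-dimensional Pascal tensor is positive definite.
   Context: The $m$th order $n$-dimensional Pascal tensor is $\mathcal{P}=(p_{i_1\dots i_m})$ with $p_{i_1\dots i_m}=\frac{(i_1+\dots+i_m-m)!}{(i_1-1)!\cdots(i_m-1)!}$ for $i_1,\dots,i_m\in\{1,\dots,n\}$ (for $m=2$ this is the symmetric Pascal matrix). For $m$ even, a symmetric tensor $\mathcal{A}$ is positive definite if $\mathcal{A}\mathbf{x}^m=\sum_{i_1,\dots,i_m}a_{i_1\dots i_m}x_{i_1}\cdots x_{i_m}>0$ for all nonzero $\mathbf{x}\in\mathbb{R}^n$. *)

(* Defs.v *)
From HB Require Import structures.
From mathcomp Require Import all_boot all_order all_fingroup all_algebra.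
Set Implicit Arguments. Unset Strict Implicit. Unset Printing Implicit Defensive.
Import Order.TTheory GRing.Theory Num.Theory.
Local Open Scope ring_scope.

(* Indices are 0-based: the paper's index i_k in {1..n} corresponds to
   the ordinal (i_k - 1) in 'I_n. *)
Definition tensor (R : Type) (m n : nat) := {ffun 'I_m -> 'I_n} -> R.

Definition symmetric_tensor (R : Type) (m n : nat) (A : tensor R m n) : Prop :=
  forall (s : {perm 'I_m}) (idx : {ffun 'I_m -> 'I_n}),
    A [ffun k => idx (s k)] = A idx.

Definition tensor_form (R : nzRingType) (m n : nat) (A : tensor R m n)
  (x : 'I_n -> R) : R :=
  \sum_(idx : {ffun 'I_m -> 'I_n}) A idx * \prod_(k < m) x (idx k).

Definition positive_definite (R : realFieldType) (m n : nat)
  (A : tensor R m n) : Prop :=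
  symmetric_tensor A /\
  forall x : 'I_n -> R, (exists i, x i != 0) -> 0 < tensor_form A x.

(* Pascal tensor: with 0-based indices j_k = i_k - 1,
   p = (j_1 + ... + j_m)! / (j_1! ... j_m!). *)
Definition pascal_tensor (R : realFieldType) (m n : nat) : tensor R m n :=
  fun idx => ((\sum_(k < m) (idx k : nat))`!)%:R /
             (\prod_(k < m) ((idx k : nat)`!)%:R).
Arguments pascal_tensor R m n idx : clear implicits.

(* Main.v *)
Require Import Defs.
From HB Require Import structures.
From mathcomp Require Import all_boot all_order all_fingroup all_algebra.
From mathcomp Require Import ring.
Import Order.TTheory GRing.Theory Num.Theory.
Local Open Scope ring_scope.
Lemma binsq (a b K : nat) : (a < K)%N ->
  'C(a + b, a) = (\sum_(i < K) 'C(a, i) * 'C(b, i))%N.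
Proof.
move=> aK.
rewrite -binomial.Vandermonde (reindex_inj rev_ord_inj) /=.
transitivity (\sum_(i < a.+1) 'C(a, i) * 'C(b, i))%N.
  apply: eq_bigr => i _; rewrite subSS subKn ?bin_sub //; last by rewrite -ltnS.
  by rewrite -ltnS.
rewrite (@big_ord_widen nat 0%N addn a.+1 K (fun i => 'C(a, i) * 'C(b, i))%N aK).
rewrite [LHS]big_mkcond /=; apply: eq_bigr => i _.
by case: ifP => // /negbT; rewrite -leqNgt => h; rewrite bin_small.
Qed.

Definition LN (R : nzRingType) (N : nat) (p : {poly R}) : R :=
  \sum_(s < N) p`_s * (s`!)%:R.
Arguments LN {R}.

Lemma LN_sum (R : nzRingType) N (I : finType) (F : I -> {poly R}) :
  LN N (\sum_i F i) = \sum_i LN N (F i).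
Proof.
rewrite /LN; under eq_bigr do rewrite coef_sum mulr_suml.
exact: exchange_big.
Qed.

Lemma LN_scaleXn (R : nzRingType) N (c : R) s : (s < N)%N ->
  LN N (c *: 'X^s) = c * (s`!)%:R.
Proof.
move=> sN; rewrite /LN (bigD1 (Ordinal sN)) //= big1 ?addr0.
  by rewrite coefZ coefXn eqxx mulr1.
move=> i /negbTE ne; rewrite coefZ coefXn.
have -> : ((i : nat) == s) = false by rewrite -ne -val_eqE.
by rewrite mulr0 mul0r.
Qed.

Lemma prod_scaleXn (R : comNzRingType) (m : nat) (c : 'I_m -> R) (e : 'I_m -> nat) :
  \prod_(k < m) (c k *: 'X^(e k)) = (\prod_(k < m) c k) *: 'X^(\sum_(k < m) e k).
Proof.
under eq_bigr do rewrite -mul_polyC.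
by rewrite big_split /= -rmorph_prod prodrXr mul_polyC.
Qed.

Lemma prod_const_ord (R : comNzRingType) (m : nat) (x : R) : \prod_(k < m) x = x ^+ m.
Proof. by rewrite prodr_const card_ord. Qed.

Lemma LN_sq (R : comNzRingType) (h : {poly R}) (N : nat) : (2 * size h <= N)%N ->
  LN N (h * h) = \sum_(i < size h) (\sum_(a < size h) h`_a * (a`!)%:R * ('C(a, i))%:R) ^+ 2.
Proof.
move=> hN; set K := size h.
have hE : h = \sum_(a < K) h`_a *: 'X^a by rewrite -poly_def coefK.
rewrite [in LHS]hE big_distrl /= LN_sum.
transitivity (\sum_(a < K) \sum_(b < K) \sum_(i < K)
   (h`_a * (a`!)%:R * ('C(a, i))%:R) * (h`_b * (b`!)%:R * ('C(b, i))%:R)).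
  apply: eq_bigr => a _; rewrite big_distrr LN_sum /=; apply: eq_bigr => b _.
  rewrite -scalerAl -scalerAr scalerA -exprD LN_scaleXn; last first.
    by move: hN; rewrite mul2n -addnn; apply: leq_trans; rewrite -addnS leq_add // ltnW.
  rewrite -(bin_fact (leq_addr b a)) addKn (@binsq a b K (ltn_ord a)).
  rewrite !natrM natr_sum mulr_suml mulr_sumr; apply: eq_bigr => i _.
  rewrite natrM; ring.
etransitivity; first by apply: eq_bigr => a _; exact: exchange_big.
etransitivity; first exact: exchange_big.
apply: eq_bigr => i _; rewrite expr2 mulr_suml; apply: eq_bigr => a _.
by rewrite mulr_sumr.
Qed.


Lemma sq_pos (R : realFieldType) (h : {poly R}) : h != 0 ->
  0 < \sum_(i < size h) (\sum_(a < size h) h`_a * (a`!)%:R * ('C(a, i))%:R) ^+ 2.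
Proof.
move=> h0; have hl : h`_(size h).-1 != 0 by rewrite -lead_coefE lead_coef_eq0.
move: hl; case E: (size h) => [|d] /=.
  by move/eqP: E; rewrite size_poly_eq0 (negbTE h0).
move=> hl.
rewrite big_ord_recr /=; apply: ltr_wpDl; first by apply: sumr_ge0 => i _; exact: sqr_ge0.
rewrite big_ord_recr /= big1 ?add0r => [|a _]; last by rewrite bin_small ?mulr0.
rewrite binn mulr1 lt0r sqr_ge0 andbT sqrf_eq0 mulf_neq0 //.
by rewrite pnatr_eq0 -lt0n fact_gt0.
Qed.

Theorem theorem2p3 (R : realFieldType) (m n : nat) :
  ~~ odd m -> (2 <= m)%N -> (2 <= n)%N ->
  positive_definite (pascal_tensor R m n).
Proof.
move=> hm m2 n2; split.
  move=> s idx; rewrite /pascal_tensor.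
  have E1 : (\sum_(k < m) [ffun k => idx (s k)] k = \sum_(k < m) idx k)%N.
    rewrite [RHS](reindex_inj (@perm_inj _ s)) /=.
    by apply: eq_bigr => k _; rewrite ffunE.
  have E2 : \prod_(k < m) (([ffun k => idx (s k)] k)`!)%:R
            = \prod_(k < m) ((idx k)`!)%:R :> R.
    rewrite [RHS](reindex_inj (@perm_inj _ s)) /=.
    by apply: eq_bigr => k _; rewrite ffunE.
  by rewrite E1 E2.
move=> x [i0 xi0].
pose y (i : 'I_n) := x i / (i`!)%:R.
pose F : {poly R} := \sum_(i < n) y i *: 'X^i.
pose h := F ^+ m./2.
pose N := (2 * size h + m * n).+1.
have Fi0 : F`_i0 = y i0.
  rewrite /F coef_sum (bigD1 i0) //= coefZ coefXn eqxx mulr1 big1 ?addr0 //.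
  move=> j /negbTE ne; rewrite coefZ coefXn.
  have -> : ((i0 : nat) == j) = false by rewrite val_eqE eq_sym ne.
  by rewrite mulr0.
have F0 : F != 0.
  apply/eqP => F0; move: Fi0; rewrite F0 coef0 => /esym/eqP.
  by rewrite /y mulf_eq0 invr_eq0 pnatr_eq0 eqn0Ngt fact_gt0 orbF (negbTE xi0).
have h0 : h != 0 by rewrite expf_neq0.
have -> : tensor_form (pascal_tensor R m n) x = LN N (h * h).
  have -> : h * h = F ^+ m.
    rewrite -expr2 -exprM; congr (F ^+ _).
    by rewrite -{2}(odd_double_half m) (negbTE hm) add0n -muln2.
  rewrite -(@prod_const_ord _ m F) bigA_distr_bigA LN_sum /tensor_form.
  apply: eq_bigr => idx _.
  rewrite prod_scaleXn LN_scaleXn; last first.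
    rewrite /N ltnS; apply: leq_trans (leq_addl _ _).
    apply: (@leq_trans (\sum_(k < m) n)%N).
      by apply: leq_sum => k _; apply: ltnW.
    by rewrite sum_nat_const card_ord.
  by rewrite /pascal_tensor /y prodf_div; ring.

rewrite LN_sq; first exact: sq_pos.
by rewrite /N ltnW // ltnS leq_addr.
Qed.
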